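(* Let $\beta>0$ and let $(\lambda_n)_{n\in\mathbb{N}_0}$ be complex numbers with $\limsup_{n\to\infty}|\lambda_n|/n\le\beta$. Then for every $\varepsilon>0$ there is $\alpha>0$ such that $$n!\,|\Phi_{\Lambda_n}(z)|\le e^{\alpha|z|}\left(\frac{e^{(1+\varepsilon)\beta|z|}-1}{(1+\varepsilon)\beta}\right)^n$$ for all $n\in\mathbb{N}_0$ and all $z\in\mathbb{C}$. Consequently $\limsup_{n\to\infty}\sqrt[n]{n!|\Phi_{\Lambda_n}(z)|}\le\frac{e^{\beta|z|}-1}{\beta}$ for all $z\in\mathbb{C}$.
   Context: For $\lambda_0,\dots,\lambda_n\in\mathbb{C}$ the fundamental function is the entire function $\Phi_{(\lambda_0,\dots,\lambda_n)}(z)=\frac{1}{2\pi i}\int_{|w|=R}\frac{e^{zw}}{(w-\lambda_0)\cdots(w-\lambda_n)}\,dw$, where $R>\max_j|\lambda_j|$ and the circle is positively oriented. For a sequence $(\lambda_n)$, $\Lambda_n=(\lambda_0,\dots,\lambda_n)$ and $\Phi_{\Lambda_n}=\Phi_{(\lambda_0,\dots,\lambda_n)}$. *)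

(* Defs.v *)
From Stdlib Require Import Reals Lra Lia ClassicalEpsilon.
Open Scope R_scope.

Record Cpx := mkC { Re : R ; Im : R }.

Definition Cplus (a b : Cpx) : Cpx := mkC (Re a + Re b) (Im a + Im b).
Definition Cminus (a b : Cpx) : Cpx := mkC (Re a - Re b) (Im a - Im b).
Definition Cmult (a b : Cpx) : Cpx :=
  mkC (Re a * Re b - Im a * Im b) (Re a * Im b + Im a * Re b).
Definition Cinv (a : Cpx) : Cpx :=
  let d := Re a * Re a + Im a * Im a in mkC (Re a / d) (- Im a / d).
Definition Cnorm (a : Cpx) : R := sqrt (Re a * Re a + Im a * Im a).
Definition Cexp (a : Cpx) : Cpx := mkC (exp (Re a) * cos (Im a)) (exp (Re a) * sin (Im a)).

Definition Rint (f : R -> R) (a b : R) : R :=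
  epsilon (inhabits 0)
    (fun I => exists pr : Riemann_integrable f a b, RiemannInt pr = I).

Fixpoint inv_prod (lam : nat -> Cpx) (n : nat) (w : Cpx) : Cpx :=
  match n with
  | O => Cinv (Cminus w (lam O))
  | S m => Cmult (inv_prod lam m w) (Cinv (Cminus w (lam (S m))))
  end.

(* a radius R > max_{j<=n} |lam j| *)
Fixpoint sum_norms (lam : nat -> Cpx) (n : nat) : R :=
  match n with
  | O => Cnorm (lam O)
  | S m => sum_norms lam m + Cnorm (lam (S m))
  end.
Definition radius (lam : nat -> Cpx) (n : nat) : R := 1 + sum_norms lam n.

(* Fundamental function Phi_{Lambda_n}(z) =
     1/(2 pi i) \oint_{|w|=R} e^{zw} / prod_{j<=n}(w - lam j) dw,
   with w = R e^{it}, dw = i w dt, t in [0, 2 pi]; i.e.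
     (1/(2 pi)) \int_0^{2 pi} e^{z w(t)} w(t) / prod_j (w(t) - lam j) dt. *)
Definition Phi_integrand (lam : nat -> Cpx) (n : nat) (z : Cpx) (t : R) : Cpx :=
  let Rr := radius lam n in
  let w := mkC (Rr * cos t) (Rr * sin t) in
  Cmult (mkC (/ (2 * PI)) 0)
        (Cmult (Cmult (Cexp (Cmult z w)) (inv_prod lam n w)) w).

Definition Phi (lam : nat -> Cpx) (n : nat) (z : Cpx) : Cpx :=
  mkC (Rint (fun t => Re (Phi_integrand lam n z t)) 0 (2 * PI))
      (Rint (fun t => Im (Phi_integrand lam n z t)) 0 (2 * PI)).

(* n-th root of a nonnegative real (with root of 0 equal to 0) *)
Definition nroot (n : nat) (x : R) : R :=
  if Rlt_dec 0 x then Rpower x (/ INR n) else 0.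

(* Main.v *)
From Stdlib Require Import Reals Lra Lia Arith ZArith ClassicalEpsilon.
From Coquelicot Require Import Coquelicot.
Require Import Defs.
Open Scope R_scope.

Lemma Cext (a b : Cpx) : Re a = Re b -> Im a = Im b -> a = b.
Proof. destruct a, b; simpl; intros; subst; reflexivity. Qed.

Definition C0 := mkC 0 0.
Definition C1 := mkC 1 0.
Definition RC (x : R) := mkC x 0.

Ltac cring := apply Cext; simpl; ring.

Lemma Cmult_comm a b : Cmult a b = Cmult b a. Proof. cring. Qed.
Lemma Cmult_assoc a b c : Cmult (Cmult a b) c = Cmult a (Cmult b c). Proof. cring. Qed.
Lemma Cplus_comm a b : Cplus a b = Cplus b a. Proof. cring. Qed.
Lemma Cmult_plus_r a b c : Cmult a (Cplus b c) = Cplus (Cmult a b) (Cmult a c). Proof. cring. Qed.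
Lemma Cmult_1_l a : Cmult C1 a = a. Proof. cring. Qed.
Lemma Cmult_0_l a : Cmult C0 a = C0. Proof. cring. Qed.

Lemma Cnorm_ge0 a : 0 <= Cnorm a.
Proof. apply sqrt_pos. Qed.

Lemma Cnorm_sq a : Cnorm a * Cnorm a = Re a * Re a + Im a * Im a.
Proof. unfold Cnorm. apply sqrt_sqrt. nra. Qed.

Lemma Cnorm_mult a b : Cnorm (Cmult a b) = Cnorm a * Cnorm b.
Proof.
  unfold Cnorm. rewrite <- sqrt_mult by nra. f_equal. simpl. ring.
Qed.

Lemma Re_le a : Rabs (Re a) <= Cnorm a.
Proof.
  unfold Cnorm. rewrite <- sqrt_Rsqr_abs. apply sqrt_le_1_alt. unfold Rsqr. nra.
Qed.
Lemma Im_le a : Rabs (Im a) <= Cnorm a.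
Proof.
  unfold Cnorm. rewrite <- sqrt_Rsqr_abs. apply sqrt_le_1_alt. unfold Rsqr. nra.
Qed.

Lemma Cnorm_le_sq a M : 0 <= M -> Re a * Re a + Im a * Im a <= M * M -> Cnorm a <= M.
Proof.
  intros HM H. unfold Cnorm. rewrite <- (sqrt_square M) by lra.
  apply sqrt_le_1_alt. lra.
Qed.

Lemma Cnorm_triangle a b : Cnorm (Cplus a b) <= Cnorm a + Cnorm b.
Proof.
  apply Cnorm_le_sq. pose proof (Cnorm_ge0 a); pose proof (Cnorm_ge0 b); lra.
  pose proof (Cnorm_sq a) as Ha. pose proof (Cnorm_sq b) as Hb.
  pose proof (Cnorm_ge0 a); pose proof (Cnorm_ge0 b).
  assert (Re a * Re b + Im a * Im b <= Cnorm a * Cnorm b).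
  { destruct (Rle_dec (Re a * Re b + Im a * Im b) 0). nra.
    apply Rsqr_incr_0_var. 2: nra. unfold Rsqr.
    replace (Cnorm a * Cnorm b * (Cnorm a * Cnorm b)) with
      ((Cnorm a * Cnorm a) * (Cnorm b * Cnorm b)) by ring.
    rewrite Ha, Hb.
    assert (0 <= (Re a * Im b - Im a * Re b)^2) by apply pow2_ge_0. nra. }
  simpl. nra.
Qed.

Lemma Cnorm_RC x : Cnorm (RC x) = Rabs x.
Proof. unfold Cnorm, RC; simpl. rewrite <- sqrt_Rsqr_abs. f_equal. unfold Rsqr; ring. Qed.

Lemma Cnorm_exp a : Cnorm (Cexp a) = exp (Re a).
Proof.
  unfold Cnorm, Cexp; simpl.
  replace (exp (Re a) * cos (Im a) * (exp (Re a) * cos (Im a)) +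
           exp (Re a) * sin (Im a) * (exp (Re a) * sin (Im a))) with
    (exp (Re a) * exp (Re a) * (Rsqr (sin (Im a)) + Rsqr (cos (Im a)))) by (unfold Rsqr; ring).
  rewrite sin2_cos2, Rmult_1_r. apply sqrt_square. pose proof (exp_pos (Re a)); lra.
Qed.

Lemma Cnorm_exp_le a : Cnorm (Cexp a) <= exp (Cnorm a).
Proof.
  rewrite Cnorm_exp. destruct (Rle_lt_dec (Re a) (Cnorm a)).
  destruct r. left; apply exp_increasing; auto. right; f_equal; auto.
  pose proof (Re_le a). apply Rabs_le_between in H. lra.
Qed.

Lemma Cnorm_opp_minus a b : Cnorm (Cminus a b) = Cnorm (Cminus b a).
Proof. unfold Cnorm; simpl. f_equal. ring. Qed.

Lemma Cnorm_minus_ge a b : Cnorm a - Cnorm b <= Cnorm (Cminus a b).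
Proof.
  assert (a = Cplus (Cminus a b) b) as E by cring.
  pose proof (Cnorm_triangle (Cminus a b) b). rewrite <- E in H. lra.
Qed.

Lemma Cnorm_minus_le a b : Cnorm (Cminus a b) <= Cnorm a + Cnorm b.
Proof.
  assert (Cminus a b = Cplus a (Cmult (RC (-1)) b)) as E by cring.
  rewrite E. eapply Rle_trans. apply Cnorm_triangle.
  rewrite Cnorm_mult, Cnorm_RC. rewrite Rabs_left by lra. lra.
Qed.

Lemma Cnorm_pos a : a <> C0 -> 0 < Re a * Re a + Im a * Im a.
Proof.
  intros H. destruct (Req_dec (Re a) 0); destruct (Req_dec (Im a) 0).
  - exfalso; apply H; apply Cext; simpl; auto.
  - nra. - nra. - nra.
Qed.

Lemma Cinv_r a : a <> C0 -> Cmult a (Cinv a) = C1.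
Proof.
  intros H. pose proof (Cnorm_pos a H). apply Cext; unfold Cinv; simpl; field; lra.
Qed.

Lemma Cnorm_inv a : a <> C0 -> Cnorm (Cinv a) = / Cnorm a.
Proof.
  intros H. pose proof (Cinv_r a H) as E.
  assert (Cnorm a * Cnorm (Cinv a) = 1).
  { rewrite <- Cnorm_mult, E. unfold Cnorm; simpl.
    replace (1*1+0*0) with 1 by ring. apply sqrt_1. }
  assert (Cnorm a <> 0). { intro h. rewrite h in H0. lra. }
  field_simplify_eq; auto. lra.
Qed.

Lemma Cnorm_nz a : 0 < Cnorm a -> a <> C0.
Proof. intros H E. subst. unfold Cnorm in H; simpl in H.
  replace (0*0+0*0) with 0 in H by ring. rewrite sqrt_0 in H. lra. Qed.

Lemma Cexp_plus a b : Cexp (Cplus a b) = Cmult (Cexp a) (Cexp b).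
Proof.
  apply Cext; unfold Cexp; simpl; rewrite exp_plus.
  rewrite cos_plus; ring. rewrite sin_plus; ring.
Qed.
Lemma Cexp_0 : Cexp C0 = C1.
Proof. apply Cext; unfold Cexp; simpl; rewrite exp_0, ?cos_0, ?sin_0; ring. Qed.

Definition CC (f : R -> Cpx) := forall t, continuity_pt (fun t => Re (f t)) t /\ continuity_pt (fun t => Im (f t)) t.

Lemma CC_const c : CC (fun _ => c).
Proof. intro t; split; apply continuity_pt_const; intros x y; reflexivity. Qed.

Lemma CC_plus f g : CC f -> CC g -> CC (fun t => Cplus (f t) (g t)).
Proof. intros Hf Hg t; destruct (Hf t), (Hg t); simpl; split; apply continuity_pt_plus; auto. Qed.
Lemma CC_minus f g : CC f -> CC g -> CC (fun t => Cminus (f t) (g t)).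
Proof. intros Hf Hg t; destruct (Hf t), (Hg t); simpl; split; apply continuity_pt_minus; auto. Qed.
Lemma CC_mult f g : CC f -> CC g -> CC (fun t => Cmult (f t) (g t)).
Proof. intros Hf Hg t; destruct (Hf t), (Hg t); simpl; split.
  apply continuity_pt_minus; apply continuity_pt_mult; auto.
  apply continuity_pt_plus; apply continuity_pt_mult; auto. Qed.
Lemma CC_exp f : CC f -> CC (fun t => Cexp (f t)).
Proof. intros Hf t; destruct (Hf t); unfold Cexp; simpl; split; apply continuity_pt_mult.
  apply (continuity_pt_comp (fun t => Re (f t)) exp); auto. apply derivable_continuous_pt, derivable_pt_exp.
  apply (continuity_pt_comp (fun t => Im (f t)) cos); auto. apply derivable_continuous_pt, derivable_pt_cos.
  apply (continuity_pt_comp (fun t => Re (f t)) exp); auto. apply derivable_continuous_pt, derivable_pt_exp.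
  apply (continuity_pt_comp (fun t => Im (f t)) sin); auto. apply derivable_continuous_pt, derivable_pt_sin.
Qed.
Lemma CC_inv f : CC f -> (forall t, f t <> C0) -> CC (fun t => Cinv (f t)).
Proof. intros Hf Hn t; destruct (Hf t). pose proof (Cnorm_pos _ (Hn t)).
  unfold Cinv; simpl; split; unfold Rdiv; apply continuity_pt_mult.
  auto. apply continuity_pt_inv. apply continuity_pt_plus; apply continuity_pt_mult; auto. lra.
  apply continuity_pt_opp; auto. apply continuity_pt_inv. apply continuity_pt_plus; apply continuity_pt_mult; auto. lra.
Qed.

Definition cw (r t : R) := mkC (r * cos t) (r * sin t).

Lemma CC_cw r : CC (cw r).
Proof. intro t; unfold cw; simpl; split; apply continuity_pt_mult;
  try (apply continuity_pt_const; intros x y; reflexivity).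
  apply derivable_continuous_pt, derivable_pt_cos. apply derivable_continuous_pt, derivable_pt_sin. Qed.

Lemma Cnorm_cw r t : 0 <= r -> Cnorm (cw r t) = r.
Proof. intros; unfold Cnorm, cw; simpl.
  replace (r * cos t * (r * cos t) + r * sin t * (r * sin t)) with (r*r*(Rsqr (sin t) + Rsqr (cos t))) by (unfold Rsqr; ring).
  rewrite sin2_cos2, Rmult_1_r. apply sqrt_square; auto. Qed.

Lemma dpl_eq f x l l' : l = l' -> derivable_pt_lim f x l -> derivable_pt_lim f x l'.
Proof. intros ->; auto. Qed.


Definition PD (f : R -> Cpx) (x : R) (d : Cpx) :=
  derivable_pt_lim (fun t => Re (f t)) x (Re d) /\ derivable_pt_lim (fun t => Im (f t)) x (Im d).

Lemma PD_ext f g x d : (forall t, f t = g t) -> PD f x d -> PD g x d.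
Proof. intros E [H1 H2]. split.
  apply (derivable_pt_lim_ext (fun t => Re (f t))); auto. intros; rewrite E; auto.
  apply (derivable_pt_lim_ext (fun t => Im (f t))); auto. intros; rewrite E; auto. Qed.

Lemma PD_const c x : PD (fun _ => c) x C0.
Proof. split; simpl; apply derivable_pt_lim_const. Qed.

Lemma PD_plus f g x a b : PD f x a -> PD g x b -> PD (fun t => Cplus (f t) (g t)) x (Cplus a b).
Proof. intros [] []; split; simpl; apply derivable_pt_lim_plus; auto. Qed.

Lemma PD_mult f g x a b : PD f x a -> PD g x b ->
  PD (fun t => Cmult (f t) (g t)) x (Cplus (Cmult a (g x)) (Cmult (f x) b)).
Proof. intros [A1 A2] [B1 B2]; split; simpl.
  - eapply dpl_eq; [| apply (derivable_pt_lim_minus (fun t => Re (f t) * Re (g t)) (fun t => Im (f t) * Im (g t)))].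
    2: apply (derivable_pt_lim_mult (fun t => Re (f t)) (fun t => Re (g t))); eauto.
    2: apply (derivable_pt_lim_mult (fun t => Im (f t)) (fun t => Im (g t))); eauto.
    ring.
  - eapply dpl_eq; [| apply (derivable_pt_lim_plus (fun t => Re (f t) * Im (g t)) (fun t => Im (f t) * Re (g t)))].
    2: apply (derivable_pt_lim_mult (fun t => Re (f t)) (fun t => Im (g t))); eauto.
    2: apply (derivable_pt_lim_mult (fun t => Im (f t)) (fun t => Re (g t))); eauto.
    ring.
Qed.

Lemma PD_exp f x a : PD f x a -> PD (fun t => Cexp (f t)) x (Cmult (Cexp (f x)) a).
Proof. intros [A1 A2]. unfold Cexp; split; simpl.
  - eapply dpl_eq; [| apply (derivable_pt_lim_mult (fun t => exp (Re (f t))) (fun t => cos (Im (f t))))].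
    2: apply (derivable_pt_lim_comp (fun t => Re (f t)) exp); [exact A1| apply derivable_pt_lim_exp].
    2: apply (derivable_pt_lim_comp (fun t => Im (f t)) cos); [exact A2| apply derivable_pt_lim_cos].
    ring.
  - eapply dpl_eq; [| apply (derivable_pt_lim_mult (fun t => exp (Re (f t))) (fun t => sin (Im (f t))))].
    2: apply (derivable_pt_lim_comp (fun t => Re (f t)) exp); [exact A1| apply derivable_pt_lim_exp].
    2: apply (derivable_pt_lim_comp (fun t => Im (f t)) sin); [exact A2| apply derivable_pt_lim_sin].
    ring.
Qed.

Lemma PD_RC g x d : derivable_pt_lim g x d -> PD (fun t => RC (g t)) x (RC d).
Proof. intros H; split; simpl; auto. apply derivable_pt_lim_const. Qed.

Lemma PD_cw r x : PD (cw r) x (mkC (- r * sin x) (r * cos x)).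
Proof. unfold cw; split; simpl.
  eapply dpl_eq; [|apply (derivable_pt_lim_mult (fun _ => r) cos); [apply derivable_pt_lim_const|apply derivable_pt_lim_cos]]. ring.
  eapply dpl_eq; [|apply (derivable_pt_lim_mult (fun _ => r) sin); [apply derivable_pt_lim_const|apply derivable_pt_lim_sin]]. ring.
Qed.

Definition TP := 2 * PI.
Definition CI (f : R -> Cpx) := mkC (RInt (fun t => Re (f t)) 0 TP) (RInt (fun t => Im (f t)) 0 TP).

Lemma TP_pos : 0 < TP. Proof. unfold TP; pose proof PI_RGT_0; lra. Qed.

Lemma exRInt_cont (f : R -> R) : (forall x, continuity_pt f x) -> ex_RInt f 0 TP.
Proof. intros H. apply ex_RInt_Reals_1. apply continuity_implies_RiemannInt.
  pose proof TP_pos; lra. intros; auto. Qed.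

Lemma Rint_RInt f : (forall x, continuity_pt f x) -> Rint f 0 (2 * PI) = RInt f 0 (2 * PI).
Proof. intros H. unfold Rint.
  assert (Hp : Riemann_integrable f 0 (2*PI)).
  { apply continuity_implies_RiemannInt. pose proof PI_RGT_0; lra. intros; auto. }
  destruct (epsilon_spec (inhabits 0) (fun I => exists pr : Riemann_integrable f 0 (2*PI), RiemannInt pr = I)) as [pr E].
  exists (RiemannInt Hp); exists Hp; auto.
  rewrite <- E. symmetry. apply RInt_Reals. Qed.

Lemma RInt_plusR (f g : R -> R) a b : ex_RInt f a b -> ex_RInt g a b ->
  RInt (fun x => f x + g x) a b = RInt f a b + RInt g a b.
Proof. intros; apply (RInt_plus f g); auto. Qed.
Lemma RInt_minusR (f g : R -> R) a b : ex_RInt f a b -> ex_RInt g a b ->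
  RInt (fun x => f x - g x) a b = RInt f a b - RInt g a b.
Proof. intros; apply (RInt_minus f g); auto. Qed.
Lemma RInt_scalR (f : R -> R) a b c : ex_RInt f a b ->
  RInt (fun x => c * f x) a b = c * RInt f a b.
Proof. intros; apply (RInt_scal f); auto. Qed.
Lemma ex_RInt_scalR (f : R -> R) a b c : ex_RInt f a b -> ex_RInt (fun x => c * f x) a b.
Proof. intros; apply (ex_RInt_scal f); auto. Qed.

Lemma CI_ext f g : (forall t, f t = g t) -> CI f = CI g.
Proof. intros E; unfold CI; f_equal; apply RInt_ext; intros; rewrite E; auto. Qed.

Lemma CI_plus f g : CC f -> CC g -> CI (fun t => Cplus (f t) (g t)) = Cplus (CI f) (CI g).
Proof. intros Hf Hg. unfold CI; apply Cext; simpl.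
  - apply RInt_plusR. apply exRInt_cont; apply Hf. apply exRInt_cont; apply Hg.
  - apply RInt_plusR. apply exRInt_cont; apply Hf. apply exRInt_cont; apply Hg.
Qed.

Lemma CI_cmult c f : CC f -> CI (fun t => Cmult c (f t)) = Cmult c (CI f).
Proof. intros Hf. assert (E1 := exRInt_cont _ (fun x => proj1 (Hf x))).
  assert (E2 := exRInt_cont _ (fun x => proj2 (Hf x))).
  unfold CI; apply Cext; simpl.
  - rewrite RInt_minusR, !RInt_scalR; auto; apply ex_RInt_scalR; auto.
  - rewrite RInt_plusR, !RInt_scalR; auto; apply ex_RInt_scalR; auto.
Qed.

Lemma CI_bound f M : CC f -> (forall t, 0 <= t <= TP -> Cnorm (f t) <= M) -> Cnorm (CI f) <= 2 * TP * M.
Proof. intros Hf HM. assert (E1 := exRInt_cont _ (fun x => proj1 (Hf x))).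
  assert (E2 := exRInt_cont _ (fun x => proj2 (Hf x))).
  pose proof TP_pos.
  assert (A1 : Rabs (Re (CI f)) <= (TP - 0) * M).
  { apply abs_RInt_le_const; auto. lra. intros; eapply Rle_trans. apply Re_le. auto. }
  assert (A2 : Rabs (Im (CI f)) <= (TP - 0) * M).
  { apply abs_RInt_le_const; auto. lra. intros; eapply Rle_trans. apply Im_le. auto. }
  apply Cnorm_le_sq. pose proof (Rabs_pos (Re (CI f))); nra.
  assert (0 <= M). { eapply Rle_trans. apply Cnorm_ge0. apply (HM 0). lra. }
  pose proof (Rabs_pos (Re (CI f))). pose proof (Rabs_pos (Im (CI f))).
  apply Rabs_le_between in A1. apply Rabs_le_between in A2. nra.
Qed.

Lemma CI_minus f g : CC f -> CC g -> CI (fun t => Cminus (f t) (g t)) = Cminus (CI f) (CI g).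
Proof. intros Hf Hg. unfold CI; apply Cext; simpl.
  - apply RInt_minusR. apply exRInt_cont; apply Hf. apply exRInt_cont; apply Hg.
  - apply RInt_minusR. apply exRInt_cont; apply Hf. apply exRInt_cont; apply Hg.
Qed.

Lemma CC_ext f g : (forall t, f t = g t) -> CC f -> CC g.
Proof. intros E H t; destruct (H t); split.
  apply (continuity_pt_ext (fun t => Re (f t))); auto. intros; rewrite E; auto.
  apply (continuity_pt_ext (fun t => Im (f t))); auto. intros; rewrite E; auto. Qed.

Lemma PD_deq f x d d' : d = d' -> PD f x d -> PD f x d'.
Proof. intros ->; auto. Qed.

Definition Cscal (s : R) (a : Cpx) := mkC (s * Re a) (s * Im a).

Lemma CC_scal s f : CC f -> CC (fun t => Cscal s (f t)).
Proof. intros Hf t; destruct (Hf t); unfold Cscal; simpl; split; apply continuity_pt_mult; auto;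
  apply continuity_pt_const; intros x y; reflexivity. Qed.

Lemma lift2 (h : R -> R) x y : continuity_pt h y -> continuity_2d_pt (fun _ v => h v) x y.
Proof. intros H. apply (continuity_1d_2d_pt_comp h (fun _ v => v)); auto. apply continuity_2d_pt_id2. Qed.

Ltac c2d := repeat match goal with
 | |- continuity_2d_pt (fun u v => @?f u v + @?g u v) _ _ => apply (continuity_2d_pt_plus f g)
 | |- continuity_2d_pt (fun u v => @?f u v - @?g u v) _ _ => apply (continuity_2d_pt_minus f g)
 | |- continuity_2d_pt (fun u v => @?f u v * @?g u v) _ _ => apply (continuity_2d_pt_mult f g)
 | |- continuity_2d_pt (fun u v => - @?f u v) _ _ => apply (continuity_2d_pt_opp f)
 | |- continuity_2d_pt (fun u v => exp (@?f u v)) _ _ =>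
     apply (continuity_1d_2d_pt_comp exp f); [apply derivable_continuous_pt, derivable_pt_exp|]
 | |- continuity_2d_pt (fun u v => cos (@?f u v)) _ _ =>
     apply (continuity_1d_2d_pt_comp cos f); [apply derivable_continuous_pt, derivable_pt_cos|]
 | |- continuity_2d_pt (fun u v => sin (@?f u v)) _ _ =>
     apply (continuity_1d_2d_pt_comp sin f); [apply derivable_continuous_pt, derivable_pt_sin|]
 | |- continuity_2d_pt (fun u v => u) _ _ => apply continuity_2d_pt_id1
 | |- continuity_2d_pt (fun u v => @?h v) _ _ => apply (lift2 h)
 end.

Lemma DL_re (al be : R -> Cpx) u t :
  is_derive (fun u => Re (Cmult (Cexp (Cscal u (al t))) (be t))) u
            (Re (Cmult (al t) (Cmult (Cexp (Cscal u (al t))) (be t)))).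
Proof. unfold Cmult, Cexp, Cscal; simpl. auto_derive; auto. ring. Qed.
Lemma DL_im (al be : R -> Cpx) u t :
  is_derive (fun u => Im (Cmult (Cexp (Cscal u (al t))) (be t))) u
            (Im (Cmult (al t) (Cmult (Cexp (Cscal u (al t))) (be t)))).
Proof. unfold Cmult, Cexp, Cscal; simpl. auto_derive; auto. ring. Qed.

Lemma DLr al be s : CC al -> CC be ->
  derivable_pt_lim (fun s => RInt (fun t => Re (Cmult (Cexp (Cscal s (al t))) (be t))) 0 TP) s
     (RInt (fun t => Re (Cmult (al t) (Cmult (Cexp (Cscal s (al t))) (be t)))) 0 TP).
Proof.
  intros Ha Hb. apply is_derive_Reals.
    replace (RInt (fun t => Re (Cmult (al t) (Cmult (Cexp (Cscal s (al t))) (be t)))) 0 TP)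
      with (RInt (fun t => Derive (fun u => Re (Cmult (Cexp (Cscal u (al t))) (be t))) s) 0 TP).
    2: { apply RInt_ext; intros; apply is_derive_unique, DL_re. }
    
    apply (is_derive_RInt_param (fun u t => Re (Cmult (Cexp (Cscal u (al t))) (be t)))).
    
    + apply filter_forall; intros; eexists; apply DL_re.
    +  intros t _. apply (continuity_2d_pt_ext (fun u v => Re (Cmult (al v) (Cmult (Cexp (Cscal u (al v))) (be v))))).
      { intros; symmetry; apply is_derive_unique, DL_re. }
      destruct (Ha t), (Hb t). unfold Cmult, Cexp, Cscal; simpl. c2d; auto; apply continuity_2d_pt_const.
    +  apply filter_forall; intros y. apply exRInt_cont.
      intro x; apply (CC_mult _ _ (CC_exp _ (CC_scal y _ Ha)) Hb x).
Qed.

Lemma DLi al be s : CC al -> CC be ->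
  derivable_pt_lim (fun s => RInt (fun t => Im (Cmult (Cexp (Cscal s (al t))) (be t))) 0 TP) s
     (RInt (fun t => Im (Cmult (al t) (Cmult (Cexp (Cscal s (al t))) (be t)))) 0 TP).
Proof.
  intros Ha Hb. apply is_derive_Reals.
    replace (RInt (fun t => Im (Cmult (al t) (Cmult (Cexp (Cscal s (al t))) (be t)))) 0 TP)
      with (RInt (fun t => Derive (fun u => Im (Cmult (Cexp (Cscal u (al t))) (be t))) s) 0 TP).
    2: { apply RInt_ext; intros; apply is_derive_unique, DL_im. }
    
    apply (is_derive_RInt_param (fun u t => Im (Cmult (Cexp (Cscal u (al t))) (be t)))).
    
    + apply filter_forall; intros; eexists; apply DL_im.
    +  intros t _. apply (continuity_2d_pt_ext (fun u v => Im (Cmult (al v) (Cmult (Cexp (Cscal u (al v))) (be v))))).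
      { intros; symmetry; apply is_derive_unique, DL_im. }
      destruct (Ha t), (Hb t). unfold Cmult, Cexp, Cscal; simpl. c2d; auto; apply continuity_2d_pt_const.
    +  apply filter_forall; intros y. apply exRInt_cont.
      intro x; apply (CC_mult _ _ (CC_exp _ (CC_scal y _ Ha)) Hb x).
Qed.

Lemma DL al be s : CC al -> CC be ->
  PD (fun s => CI (fun t => Cmult (Cexp (Cscal s (al t))) (be t))) s
     (CI (fun t => Cmult (al t) (Cmult (Cexp (Cscal s (al t))) (be t)))).
Proof. intros; split; [apply DLr | apply DLi]; auto. Qed.

Lemma CS v w : Re v * Re w + Im v * Im w <= Cnorm v * Cnorm w.
Proof.
  set (cv := mkC (Re v) (- Im v)).
  assert (Cnorm cv = Cnorm v). { unfold Cnorm, cv; simpl. f_equal; ring. }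
  pose proof (Re_le (Cmult cv w)). rewrite Cnorm_mult, H in H0.
  apply Rabs_le_between in H0. unfold cv in H0; simpl in H0. lra.
Qed.

Lemma incr_G (G G' : R -> R) a b : a <= b ->
  (forall x, a <= x <= b -> derivable_pt_lim G x (G' x)) ->
  (forall x, a <= x <= b -> 0 <= G' x) -> G a <= G b.
Proof.
  intros Hab HG HG'. destruct Hab as [Hab| ->]; [|lra].
  destruct (MVT_cor2 G G' a b Hab HG) as [c [E Hc]].
  assert (0 <= G' c) by (apply HG'; lra). nra.
Qed.

Lemma CMP (F F' : R -> Cpx) (G G' : R -> R) a b : a <= b ->
  (forall x, a <= x <= b -> PD F x (F' x)) ->
  (forall x, a <= x <= b -> derivable_pt_lim G x (G' x)) ->
  (forall x, a <= x <= b -> Cnorm (F' x) <= G' x) ->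
  Cnorm (Cminus (F b) (F a)) <= G b - G a.
Proof.
  intros Hab HF HG HB.
  set (v := Cminus (F b) (F a)). set (N := Cnorm v).
  set (phi := fun x => N * G x - (Re v * Re (F x) + Im v * Im (F x))).
  set (phi' := fun x => N * G' x - (Re v * Re (F' x) + Im v * Im (F' x))).
  assert (Hp : phi a <= phi b).
  { apply (incr_G phi phi'); auto.
    - intros x Hx. destruct (HF x Hx) as [H1 H2]. unfold phi, phi'.
      apply derivable_pt_lim_minus.
      apply (derivable_pt_lim_scal G N). auto.
      apply (derivable_pt_lim_plus (fun x => Re v * Re (F x)) (fun x => Im v * Im (F x)));
        apply derivable_pt_lim_scal; auto.
    - intros x Hx. unfold phi'. pose proof (CS v (F' x)). pose proof (HB x Hx).
      pose proof (Cnorm_ge0 v). fold N in H, H1.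
      assert (N * Cnorm (F' x) <= N * G' x) by (apply Rmult_le_compat_l; auto). lra. }
  assert (HGab : G a <= G b).
  { apply (incr_G G G'); auto. intros x Hx. eapply Rle_trans. apply Cnorm_ge0. auto. }
  unfold phi in Hp.
  assert (Nsq : N * N = Re v * Re v + Im v * Im v) by apply Cnorm_sq.
  assert (Re v = Re (F b) - Re (F a)) by reflexivity.
  assert (Im v = Im (F b) - Im (F a)) by reflexivity.
  fold N. pose proof (Cnorm_ge0 v). fold N in H1.
  destruct (Req_dec N 0). lra.
  assert (N * N <= N * (G b - G a)) by nra.
  apply Rmult_le_reg_l with N; lra.
Qed.

Lemma CI_deriv (F F' : R -> Cpx) : (forall x, PD F x (F' x)) -> CC F' -> CI F' = Cminus (F TP) (F 0).
Proof.
  intros HF HC. unfold CI; apply Cext; simpl.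
  - apply is_RInt_unique. apply (is_RInt_derive (fun t => Re (F t))).
    + intros; apply is_derive_Reals, HF.
    + intros; apply continuity_pt_filterlim, HC.
  - apply is_RInt_unique. apply (is_RInt_derive (fun t => Im (F t))).
    + intros; apply is_derive_Reals, HF.
    + intros; apply continuity_pt_filterlim, HC.
Qed.

Lemma RInt_cos_k (k : nat) : (1 <= k)%nat -> RInt (fun t => cos (INR k * t)) 0 TP = 0.
Proof.
  intros Hk. assert (INR k <> 0). { apply not_0_INR; lia. }
  assert (HI : is_RInt (fun t => cos (INR k * t)) 0 TP (minus ((fun t => sin (INR k * t) / INR k) TP) ((fun t => sin (INR k * t) / INR k) 0))).
  { apply (is_RInt_derive (fun t => sin (INR k * t) / INR k) (fun t => cos (INR k * t))).
  - intros; auto_derive; auto. field; auto.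
  - intros. apply continuity_pt_filterlim. apply derivable_continuous_pt.
    apply (derivable_pt_comp (fun t => INR k * t) cos). apply derivable_pt_scal, derivable_pt_id. apply derivable_pt_cos. }
  apply (is_RInt_unique (V:=R_CompleteNormedModule)) in HI. rewrite HI.
  simpl. unfold minus, plus, opp; simpl. unfold TP.
    replace (INR k * (2 * PI)) with (0 + 2 * INR k * PI) by ring. rewrite sin_period.
    rewrite Rmult_0_r, sin_0. field; auto.
Qed.

Lemma RInt_sin_k (k : nat) : (1 <= k)%nat -> RInt (fun t => sin (INR k * t)) 0 TP = 0.
Proof.
  intros Hk. assert (INR k <> 0). { apply not_0_INR; lia. }
  assert (HI : is_RInt (fun t => sin (INR k * t)) 0 TP (minus ((fun t => - cos (INR k * t) / INR k) TP) ((fun t => - cos (INR k * t) / INR k) 0))).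
  { apply (is_RInt_derive (fun t => - cos (INR k * t) / INR k) (fun t => sin (INR k * t))).
  - intros; auto_derive; auto. field; auto.
  - intros. apply continuity_pt_filterlim. apply derivable_continuous_pt.
    apply (derivable_pt_comp (fun t => INR k * t) sin). apply derivable_pt_scal, derivable_pt_id. apply derivable_pt_sin. }
  apply (is_RInt_unique (V:=R_CompleteNormedModule)) in HI. rewrite HI.
  simpl. unfold minus, plus, opp; simpl. unfold TP.
    replace (INR k * (2 * PI)) with (0 + 2 * INR k * PI) by ring. rewrite cos_period.
    rewrite Rmult_0_r, cos_0. field; auto.
Qed.

Fixpoint Cpow (a : Cpx) (n : nat) : Cpx :=
  match n with O => C1 | S m => Cmult a (Cpow a m) end.

Lemma cw_pow r t n : Cpow (cw r t) n = cw (r ^ n) (INR n * t).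
Proof.
  induction n.
  - apply Cext; simpl; rewrite Rmult_0_l, ?cos_0, ?sin_0; ring.
  - simpl Cpow. rewrite IHn. rewrite S_INR. apply Cext; unfold cw; simpl.
    replace ((INR n + 1) * t) with (t + INR n * t) by ring. rewrite cos_plus. ring.
    replace ((INR n + 1) * t) with (t + INR n * t) by ring. rewrite sin_plus. ring.
Qed.

Lemma cw_inv r t : 0 < r -> Cinv (cw r t) = cw (/ r) (- t).
Proof.
  intros Hr. assert (E : r * cos t * (r * cos t) + r * sin t * (r * sin t) = r * r).
  { replace (r * cos t * (r * cos t) + r * sin t * (r * sin t)) with (r*r*(Rsqr (sin t) + Rsqr (cos t))) by (unfold Rsqr; ring).
    rewrite sin2_cos2. ring. }
  apply Cext; unfold Cinv, cw; simpl; rewrite E, ?cos_neg, ?sin_neg; field; lra.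
Qed.

Lemma CI_cw_pow r k : (1 <= k)%nat -> CI (fun t => cw (r ^ k) (INR k * t)) = C0.
Proof.
  intros Hk. unfold CI, cw; apply Cext; simpl.
  - rewrite RInt_scalR. rewrite RInt_cos_k; auto. ring.
    apply exRInt_cont. intros; apply derivable_continuous_pt.
    apply (derivable_pt_comp (fun t => INR k * t) cos). apply derivable_pt_scal, derivable_pt_id. apply derivable_pt_cos.
  - rewrite RInt_scalR. rewrite RInt_sin_k; auto. ring.
    apply exRInt_cont. intros; apply derivable_continuous_pt.
    apply (derivable_pt_comp (fun t => INR k * t) sin). apply derivable_pt_scal, derivable_pt_id. apply derivable_pt_sin.
Qed.

Lemma CI_inv_pow r k : 0 < r -> (1 <= k)%nat -> CI (fun t => Cpow (Cinv (cw r t)) k) = C0.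
Proof.
  intros Hr Hk.
  assert (Hc : forall x, continuity_pt (fun t => cos (INR k * t)) x).
  { intros; apply derivable_continuous_pt.
    apply (derivable_pt_comp (fun t => INR k * t) cos). apply derivable_pt_scal, derivable_pt_id. apply derivable_pt_cos. }
  assert (Hs : forall x, continuity_pt (fun t => sin (INR k * t)) x).
  { intros; apply derivable_continuous_pt.
    apply (derivable_pt_comp (fun t => INR k * t) sin). apply derivable_pt_scal, derivable_pt_id. apply derivable_pt_sin. }
  unfold CI; apply Cext; simpl.
  - rewrite (RInt_ext _ (fun t => (/ r) ^ k * cos (INR k * t))).
    rewrite RInt_scalR, RInt_cos_k; auto. ring. apply exRInt_cont; auto.
    intros; rewrite cw_inv, cw_pow by auto; unfold cw; simpl.
    rewrite <- Ropp_mult_distr_r, cos_neg; auto.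
  - rewrite (RInt_ext _ (fun t => - (/ r) ^ k * sin (INR k * t))).
    rewrite RInt_scalR, RInt_sin_k; auto. ring. apply exRInt_cont; auto.
    intros; rewrite cw_inv, cw_pow by auto; unfold cw; simpl.
    rewrite <- Ropp_mult_distr_r, sin_neg; ring.
Qed.

Lemma CI_cw r : CI (cw r) = C0.
Proof.
  rewrite <- (CI_cw_pow r 1%nat) by lia. apply CI_ext. intros; f_equal; simpl; ring.
Qed.

Lemma CI_one : CI (fun _ => C1) = RC TP.
Proof. unfold CI; apply Cext; simpl; rewrite RInt_const; unfold scal; simpl; unfold mult; simpl; ring. Qed.

Definition q (lam : nat -> Cpx) (k : nat) (w : Cpx) : Cpx :=
  match k with O => C1 | S m => inv_prod lam m w end.

Lemma q_S lam k w : q lam (S k) w = Cmult (q lam k w) (Cinv (Cminus w (lam k))).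
Proof. destruct k; simpl; auto. rewrite Cmult_1_l; auto. Qed.

Lemma Cnorm_pow a m : Cnorm (Cpow a m) = Cnorm a ^ m.
Proof. induction m; simpl. unfold Cnorm, C1; simpl. replace (1*1+0*0) with 1 by ring. apply sqrt_1.
  rewrite Cnorm_mult, IHm; auto. Qed.

Lemma CC_pow f m : CC f -> CC (fun t => Cpow (f t) m).
Proof. intros H; induction m; simpl. apply CC_const. apply CC_mult; auto. Qed.

Section Circle.
Variable lam : nat -> Cpx.
Variable r : R.
Variable N : nat.
Hypothesis Hr : forall j, (j <= N)%nat -> Cnorm (lam j) < r.

Lemma r_pos : 0 < r.
Proof. pose proof (Hr 0 ltac:(lia)). pose proof (Cnorm_ge0 (lam 0)). lra. Qed.

Lemma nz_j j t : (j <= N)%nat -> Cminus (cw r t) (lam j) <> C0.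
Proof. intros Hj. apply Cnorm_nz. pose proof (Cnorm_minus_ge (cw r t) (lam j)).
  rewrite Cnorm_cw in H by (pose proof r_pos; lra). pose proof (Hr j Hj). lra. Qed.

Lemma nz_w t : cw r t <> C0.
Proof. apply Cnorm_nz. rewrite Cnorm_cw; pose proof r_pos; lra. Qed.

Lemma CC_q k : (k <= S N)%nat -> CC (fun t => q lam k (cw r t)).
Proof.
  induction k; intros Hk. apply (CC_ext (fun _ => C1)); [reflexivity| apply CC_const].
  apply (CC_ext (fun t => Cmult (q lam k (cw r t)) (Cinv (Cminus (cw r t) (lam k))))).
  intros; rewrite q_S; auto.
  apply CC_mult. apply IHk; lia. apply CC_inv. apply CC_minus. apply CC_cw. apply CC_const.
  intros; apply nz_j; lia.
Qed.

Lemma q_bound k : (k <= S N)%nat -> exists M, forall t, Cnorm (q lam k (cw r t)) <= M.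
Proof.
  induction k; intros Hk. exists 1; intros; simpl. unfold Cnorm; simpl. replace (1*1+0*0) with 1 by ring. rewrite sqrt_1; lra.
  destruct IHk as [M HM]. lia.
  exists (M * / (r - Cnorm (lam k))). intros t. rewrite q_S, Cnorm_mult, Cnorm_inv by (apply nz_j; lia).
  pose proof (Hr k ltac:(lia)).
  pose proof (Cnorm_minus_ge (cw r t) (lam k)). rewrite Cnorm_cw in H0 by (pose proof r_pos; lra).
  apply Rmult_le_compat. apply Cnorm_ge0. left; apply Rinv_0_lt_compat. pose proof (Cnorm_ge0 (lam k)). lra.
  auto. apply Rinv_le_contravar; lra.
Qed.

Definition B k m := CI (fun t => Cmult (Cpow (Cinv (cw r t)) m) (Cmult (cw r t) (q lam k (cw r t)))).

Lemma CC_B k m : (k <= S N)%nat -> CC (fun t => Cmult (Cpow (Cinv (cw r t)) m) (Cmult (cw r t) (q lam k (cw r t)))).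
Proof. intros; apply CC_mult. apply CC_pow, CC_inv. apply CC_cw. apply nz_w.
  apply CC_mult. apply CC_cw. apply CC_q; auto. Qed.

Lemma B_0_0 : B 0 0 = C0.
Proof. unfold B. rewrite <- (CI_cw r). apply CI_ext; intros; simpl; cring. Qed.

Lemma B_0_1 : B 0 1 = RC TP.
Proof. unfold B. rewrite <- CI_one. apply CI_ext; intros; simpl.
  transitivity (Cmult (cw r t) (Cinv (cw r t))). cring. apply Cinv_r, nz_w. Qed.

Lemma B_0_SS m : B 0 (S (S m)) = C0.
Proof. unfold B. rewrite <- (CI_inv_pow r (S m)) by (try apply r_pos; lia). apply CI_ext; intros.
  simpl q. change (Cpow (Cinv (cw r t)) (S (S m))) with (Cmult (Cinv (cw r t)) (Cpow (Cinv (cw r t)) (S m))).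
  pose proof (Cinv_r (cw r t) (nz_w t)).
  transitivity (Cmult (Cmult (cw r t) (Cinv (cw r t))) (Cpow (Cinv (cw r t)) (S m))). cring.
  rewrite H. cring. Qed.

Lemma B_rec k m : (k <= N)%nat -> B k (S m) = Cminus (B (S k) m) (Cmult (lam k) (B (S k) (S m))).
Proof.
  intros Hk. unfold B. rewrite <- CI_cmult, <- CI_minus.
  2: apply CC_B; lia. 2: apply CC_mult; [apply CC_const| apply CC_B; lia]. 2: apply CC_B; lia.
  apply CI_ext; intros t.
  set (w := cw r t). set (X := Cinv w). set (Y := Cpow X m). set (Q := q lam (S k) w).
  assert (HX : Cmult X w = C1). { unfold X; rewrite Cmult_comm; apply Cinv_r, nz_w. }
  assert (HQ : q lam k w = Cmult Q (Cminus w (lam k))).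
  { unfold Q. rewrite q_S, Cmult_assoc. rewrite (Cmult_comm (Cinv _)), Cinv_r. cring. apply nz_j; auto. }
  change (Cpow X (S m)) with (Cmult X Y). rewrite HQ.
  transitivity (Cminus (Cmult (Cmult X w) (Cmult Y (Cmult w Q))) (Cmult (lam k) (Cmult (Cmult X Y) (Cmult w Q)))).
  cring. rewrite HX. cring.
Qed.

Lemma B_bound k : (k <= S N)%nat -> exists c, 0 <= c /\ forall m, Cnorm (B k m) <= c * (/ r) ^ m.
Proof.
  intros Hk. destruct (q_bound k Hk) as [M HM].
  assert (0 <= M). { eapply Rle_trans. apply Cnorm_ge0. apply (HM 0). }
  exists (2 * TP * (r * M)). split. pose proof TP_pos; pose proof r_pos; apply Rmult_le_pos; [lra| apply Rmult_le_pos; lra].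
  intros m. unfold B.
  eapply Rle_trans. apply (CI_bound _ ((/ r) ^ m * (r * M))). apply CC_B; auto.
  intros t _. rewrite !Cnorm_mult, Cnorm_pow, Cnorm_inv, Cnorm_cw by (try apply nz_w; pose proof r_pos; lra).
  apply Rmult_le_compat_l. apply pow_le. left; apply Rinv_0_lt_compat, r_pos.
  apply Rmult_le_compat_l. pose proof r_pos; lra. auto.
  right; ring.
Qed.

Lemma decay (b : nat -> Cpx) (l : Cpx) c m0 : 0 <= c -> Cnorm l < r ->
  (forall m, Cnorm (b m) <= c * (/ r) ^ m) ->
  (forall m, (m0 <= m)%nat -> b m = Cmult l (b (S m))) ->
  forall m, (m0 <= m)%nat -> b m = C0.
Proof.
  intros Hc Hl Hb Hrec m Hm.
  assert (HK : forall K, b m = Cmult (Cpow l K) (b (m + K)%nat)).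
  { induction K. rewrite Nat.add_0_r; simpl; cring.
    rewrite IHK. rewrite (Hrec (m + K)%nat) by lia. replace (S (m+K)) with (m + S K)%nat by lia. simpl. cring. }
  pose proof r_pos.
  assert (Hx : Rabs (Cnorm l * / r) < 1).
  { rewrite Rabs_right. apply (Rmult_lt_reg_r r); auto. field_simplify; lra.
    apply Rle_ge, Rmult_le_pos. apply Cnorm_ge0. left; apply Rinv_0_lt_compat; auto. }
  destruct (Req_dec (Cnorm (b m)) 0) as [E|NE].
  { destruct (b m); unfold Cnorm in E; simpl in E. apply sqrt_eq_0 in E. 2: nra.
    apply Cext; simpl; nra. }
  exfalso.
  assert (Hpos : 0 < Cnorm (b m)) by (pose proof (Cnorm_ge0 (b m)); lra).
  assert (Hden : 0 < c * (/ r) ^ m + 1).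
  { assert (0 <= c * (/r)^m) by (apply Rmult_le_pos; auto; apply pow_le; left; apply Rinv_0_lt_compat; auto). lra. }
  destruct (pow_lt_1_zero _ Hx (Cnorm (b m) / (c * (/ r) ^ m + 1))) as [K HK2].
  apply Rdiv_lt_0_compat; auto.
  specialize (HK2 K (le_n K)). specialize (HK K).
  assert (Cnorm (b m) <= (Cnorm l * / r) ^ K * (c * (/ r) ^ m)).
  { rewrite HK at 1. rewrite Cnorm_mult, Cnorm_pow. eapply Rle_trans.
    apply Rmult_le_compat_l. apply pow_le, Cnorm_ge0. apply Hb.
    rewrite pow_add, Rpow_mult_distr. right; ring. }
  rewrite Rabs_right in HK2. 2: apply Rle_ge, pow_le, Rmult_le_pos; [apply Cnorm_ge0|left; apply Rinv_0_lt_compat; auto].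
  assert ((Cnorm l * / r) ^ K * (c * (/ r) ^ m) <= (Cnorm l * / r) ^ K * (c * (/ r) ^ m + 1)).
  { apply Rmult_le_compat_l. apply pow_le, Rmult_le_pos; [apply Cnorm_ge0|left; apply Rinv_0_lt_compat; auto]. lra. }
  assert ((Cnorm l * / r) ^ K * (c * (/ r) ^ m + 1) < Cnorm (b m)).
  { apply (Rmult_lt_compat_r (c * (/ r) ^ m + 1)) in HK2; auto.
    unfold Rdiv in HK2. rewrite Rmult_assoc, Rinv_l in HK2; lra. }
  lra.
Qed.

Lemma eq_of_minus a x : C0 = Cminus a x -> a = x.
Proof. intros H. apply (f_equal Re) in H as H1; apply (f_equal Im) in H as H2. simpl in *.
  apply Cext; lra. Qed.

Lemma B_pos k : (k <= N)%nat -> forall m, (1 <= m)%nat -> B (S k) m = C0.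
Proof.
  induction k; intros Hk.
  - destruct (B_bound 1 ltac:(lia)) as [c [Hc Hb]].
    apply (decay (B 1) (lam 0) c 1); [auto| apply Hr; lia| auto| ].
    intros m Hm. pose proof (B_rec 0 m ltac:(lia)). destruct m. lia.
    rewrite B_0_SS in H. apply eq_of_minus; auto.
  - destruct (B_bound (S (S k)) ltac:(lia)) as [c [Hc Hb]].
    apply (decay (B (S (S k))) (lam (S k)) c 1); [auto| apply Hr; lia| auto| ].
    intros m Hm. pose proof (B_rec (S k) m Hk).
    rewrite (IHk ltac:(lia) (S m) ltac:(lia)) in H.
    apply eq_of_minus; auto.
Qed.

Lemma B_S_0 k : (k <= N)%nat -> B (S k) 0 = match k with O => RC TP | _ => C0 end.
Proof.
  intros Hk. pose proof (B_rec k 0 Hk).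
  rewrite (B_pos k Hk 1 ltac:(lia)) in H.
  assert (B (S k) 0 = B k 1). { rewrite H. generalize (B (S k) 0) (lam k); intros; cring. }
  rewrite H0. destruct k. apply B_0_1. apply B_pos; lia.
Qed.
End Circle.

Definition CI_ := mkC 0 1.

Lemma cw_period r : cw r TP = cw r 0.
Proof. unfold cw, TP. rewrite cos_2PI, sin_2PI, cos_0, sin_0. auto. Qed.

Lemma CI_exp_w r z : CI (fun t => Cmult (Cexp (Cmult z (cw r t))) (cw r t)) = C0.
Proof.
  destruct (Req_dec (Cnorm z) 0) as [Hz|Hz].
  - assert (z = C0). { destruct z; unfold Cnorm in Hz; simpl in Hz. apply sqrt_eq_0 in Hz. 2: nra.
      apply Cext; simpl; nra. }
    subst. transitivity (CI (cw r)); [|apply CI_cw]. apply CI_ext. intros t. cbv beta. rewrite Cmult_0_l, Cexp_0, Cmult_1_l. auto.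
  - set (F := fun t => Cexp (Cmult z (cw r t))).
    assert (HD : forall x, PD F x (Cmult (Cmult z CI_) (Cmult (Cexp (Cmult z (cw r x))) (cw r x)))).
    { intros x. unfold F. eapply PD_deq; [| apply PD_exp, PD_mult; [apply PD_const| apply PD_cw]].
      unfold cw; cring. }
    assert (Hn : Cmult z CI_ <> C0).
    { apply Cnorm_nz. rewrite Cnorm_mult. unfold Cnorm at 2; simpl. replace (0*0+1*1) with 1 by ring.
      rewrite sqrt_1. pose proof (Cnorm_ge0 z); lra. }
    set (X := CI _).
    assert (E : Cmult (Cmult z CI_) X = C0).
    { unfold X. rewrite <- CI_cmult. rewrite (CI_deriv F _ HD). unfold F. rewrite cw_period. cring.
      apply CC_mult. apply CC_const. apply CC_mult. apply CC_exp, CC_mult. apply CC_const. apply CC_cw. apply CC_cw.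
      apply CC_mult. apply CC_exp, CC_mult. apply CC_const. apply CC_cw. apply CC_cw. }
    transitivity (Cmult (Cinv (Cmult z CI_)) (Cmult (Cmult z CI_) X)).
    rewrite <- Cmult_assoc, (Cmult_comm (Cinv _)), Cinv_r by auto. symmetry; apply Cmult_1_l.
    rewrite E. generalize (Cinv (Cmult z CI_)); intros; cring.
Qed.

Section ODE.
Variable lam : nat -> Cpx.
Variable r : R.
Variable N : nat.
Hypothesis Hr : forall j, (j <= N)%nat -> Cnorm (lam j) < r.
Variable z : Cpx.

Definition Ef s t := Cexp (Cscal s (Cmult z (cw r t))).
Definition bt k t := Cmult (RC (/ TP)) (Cmult (q lam k (cw r t)) (cw r t)).
Definition G k s := CI (fun t => Cmult (Ef s t) (bt k t)).

Lemma CC_bt k : (k <= S N)%nat -> CC (bt k).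
Proof. intros; apply CC_mult. apply CC_const. apply CC_mult. apply CC_q with (N := N); auto. apply CC_cw. Qed.

Lemma CC_Ef s : CC (Ef s).
Proof. apply CC_exp, CC_scal, CC_mult. apply CC_const. apply CC_cw. Qed.

Lemma G_0 s : G 0 s = C0.
Proof.
  unfold G. transitivity (CI (fun t => Cmult (RC (/TP)) (Cmult (Cexp (Cmult (Cscal s z) (cw r t))) (cw r t)))).
  apply CI_ext; intros. unfold Ef, bt. simpl q.
  replace (Cscal s (Cmult z (cw r t))) with (Cmult (Cscal s z) (cw r t)) by cring. cring.
  rewrite CI_cmult, CI_exp_w. cring.
  apply CC_mult. apply CC_exp, CC_mult. apply CC_const. apply CC_cw. apply CC_cw.
Qed.

Lemma G_rec k s : (k <= N)%nat ->
  PD (G (S k)) s (Cmult z (Cplus (Cmult (lam k) (G (S k) s)) (G k s))).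
Proof.
  intros Hk. unfold G.
  eapply PD_deq; [| apply (DL (fun t => Cmult z (cw r t)) (bt (S k)) s)].
  2: apply CC_mult; [apply CC_const| apply CC_cw].
  2: apply CC_bt; lia.
  rewrite <- CI_cmult, <- CI_plus, <- CI_cmult.
  - apply CI_ext; intros t. unfold bt, Ef.
    set (w := cw r t). set (EE := Cexp (Cscal s (Cmult z w))). set (Q := q lam (S k) w).
    assert (HQ : q lam k w = Cmult Q (Cminus w (lam k))).
    { unfold Q. rewrite q_S, Cmult_assoc. rewrite (Cmult_comm (Cinv _)), Cinv_r. cring. apply nz_j with (N := N); auto. }
    rewrite HQ. cring.
  all: repeat first [(apply CC_bt; lia) | apply CC_Ef | apply CC_plus | apply CC_mult | apply CC_const | apply CC_cw | (apply CC_q with (N := N); auto; lia)].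

Qed.

Lemma G_init k : (k <= N)%nat -> G (S k) 0 = match k with O => C1 | _ => C0 end.
Proof.
  intros Hk. unfold G.
  transitivity (Cmult (RC (/ TP)) (B lam r (S k) 0)).
  - unfold B. rewrite <- CI_cmult. apply CI_ext; intros. unfold Ef, bt.
    replace (Cscal 0 (Cmult z (cw r t))) with C0 by cring. rewrite Cexp_0. simpl Cpow. cring.
    apply CC_B with (N := N); auto; lia.
  - rewrite B_S_0 with (N := N); auto. destruct k. apply Cext; simpl. field. pose proof TP_pos; lra. ring.
    cring.
Qed.

End ODE.

Definition gf (C c : R) (k : nat) (y : R) :=
  exp (C * y) * (exp (c * y) - 1) ^ k / (c ^ k * INR (fact k)).

Lemma gf_deriv C c x s m tau : 0 < c ->
  derivable_pt_lim (fun tau => exp ((C + c * INR (S m)) * x * (s - tau)) * gf C c (S m) (x * tau)) tau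
    (x * exp ((C + c * INR (S m)) * x * (s - tau)) * gf C c m (x * tau)).
Proof.
  intros Hc. apply is_derive_Reals. unfold gf.
  assert (INR (fact m) <> 0) by (apply not_0_INR, fact_neq_0).
  assert (c ^ m <> 0) by (apply pow_nonzero; lra).
  auto_derive; [auto|].
  change (match m with 0%nat => 1 | S _ => INR m + 1 end) with (INR (S m)).
  rewrite plus_INR, mult_INR, S_INR.
  set (u := exp (c * (x * tau))). set (v := exp (C * (x * tau))).
  set (w := exp ((C + c * (INR m + 1)) * x * (s + - tau))).
  replace (exp ((C + c * (INR m + 1)) * x * (s - tau))) with w by (unfold w; f_equal; ring).
  assert (INR (fact m) + INR m * INR (fact m) = (INR m + 1) * INR (fact m)) as -> by ring.
  replace (u + - (1)) with (u - 1) by ring. set (P := (u - 1) ^ m). unfold u, v in *. field. split; auto. pose proof (pos_INR m). split; lra.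
Qed.

Lemma Re_le' a : Re a <= Cnorm a.
Proof. pose proof (Re_le a). apply Rabs_le_between in H. lra. Qed.

Lemma PD_scal_lin a s tau : PD (fun t => Cscal (s - t) a) tau (Cscal (-1) a).
Proof. unfold Cscal; split; simpl.
  - eapply dpl_eq; [| apply (derivable_pt_lim_mult (fun t => s - t) (fun _ => Re a));
      [apply (derivable_pt_lim_minus (fun _ => s) id); [apply derivable_pt_lim_const| apply derivable_pt_lim_id]|apply derivable_pt_lim_const]]. ring.
  - eapply dpl_eq; [| apply (derivable_pt_lim_mult (fun t => s - t) (fun _ => Im a));
      [apply (derivable_pt_lim_minus (fun _ => s) id); [apply derivable_pt_lim_const| apply derivable_pt_lim_id]|apply derivable_pt_lim_const]]. ring.
Qed.

Section Bound.
Variable lam : nat -> Cpx.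
Variable r : R.
Variable N : nat.
Hypothesis Hr : forall j, (j <= N)%nat -> Cnorm (lam j) < r.
Variable z : Cpx.
Variables C c : R.
Hypothesis Hc : 0 < c.
Hypothesis HC : 0 <= C.
Hypothesis Ha : forall j, (j <= N)%nat -> Cnorm (lam j) <= C + c * INR j.

Local Notation x := (Cnorm z).

Definition Hf k s tau := Cmult (Cexp (Cscal (s - tau) (Cmult z (lam k)))) (G lam r z (S k) tau).

Lemma Hf_deriv k s tau : (k <= N)%nat ->
  PD (Hf k s) tau (Cmult (Cexp (Cscal (s - tau) (Cmult z (lam k)))) (Cmult z (G lam r z k tau))).
Proof.
  intros Hk. unfold Hf.
  eapply PD_deq; [| apply PD_mult; [apply PD_exp, PD_scal_lin | apply G_rec with (N := N); auto]].
  generalize (G lam r z (S k) tau) (G lam r z k tau).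
  intros. unfold Cscal. cring.
Qed.

Lemma exp_le_exp' a b : a <= b -> exp a <= exp b.
Proof. intros [H| ->]. left; apply exp_increasing; auto. right; auto. Qed.

Lemma E_bound k s tau : (k <= N)%nat -> tau <= s ->
  Cnorm (Cexp (Cscal (s - tau) (Cmult z (lam k)))) <= exp ((C + c * INR k) * x * (s - tau)).
Proof.
  intros Hk Ht. rewrite Cnorm_exp. unfold Cscal; cbn [Re].
  apply exp_le_exp'.
  pose proof (Re_le' (Cmult z (lam k))). rewrite Cnorm_mult in H.
  pose proof (Ha k Hk). assert (0 <= x) by apply Cnorm_ge0.
  assert (x * Cnorm (lam k) <= (C + c * INR k) * x) by nra.
  assert (0 <= s - tau) by lra.
  replace ((C + c * INR k) * x * (s - tau)) with ((s - tau) * ((C + c * INR k) * x)) by ring.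
  apply Rmult_le_compat_l; lra.
Qed.

Lemma Cnorm_C0 : Cnorm C0 = 0.
Proof. unfold Cnorm; simpl. replace (0*0+0*0) with 0 by ring. apply sqrt_0. Qed.

Lemma Hf_s k s : Hf k s s = G lam r z (S k) s.
Proof. unfold Hf. replace (Cscal (s - s) (Cmult z (lam k))) with C0 by (unfold Cscal; apply Cext; simpl; ring).
  rewrite Cexp_0. apply Cmult_1_l. Qed.

Lemma G_bound k : (k <= N)%nat -> forall s, 0 <= s <= 1 -> Cnorm (G lam r z (S k) s) <= gf C c k (x * s).
Proof.
  induction k; intros Hk s Hs.
  - pose proof (CMP (Hf 0 s) (fun tau => Cmult (Cexp (Cscal (s - tau) (Cmult z (lam 0)))) (Cmult z (G lam r z 0 tau)))
      (fun _ => 0) (fun _ => 0) 0 s ltac:(lra)) as HM.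
    assert (Cnorm (Cminus (Hf 0 s s) (Hf 0 s 0)) <= 0).
    { replace 0 with (0 - 0) at 2 by ring. apply HM.
      - intros; apply Hf_deriv; lia.
      - intros; apply derivable_pt_lim_const.
      - intros. rewrite G_0. replace (Cmult _ (Cmult z C0)) with C0 by cring. rewrite Cnorm_C0; lra. }
    rewrite Hf_s in H. unfold Hf in H. rewrite (G_init lam r N Hr) in H by lia.
    set (E := Cexp (Cscal (s - 0) (Cmult z (lam 0)))) in H.
    assert (G lam r z 1 s = Cplus (Cminus (G lam r z 1 s) (Cmult E C1)) E) as ->.
    { generalize (G lam r z 1 s). intros; cring. }
    eapply Rle_trans. apply Cnorm_triangle.
    assert (Cnorm E <= exp (C * (x * s))).
    { unfold E. eapply Rle_trans. apply E_bound; [lia|lra]. simpl INR. right; f_equal; ring. }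
    unfold gf. simpl. replace (exp (C * (x * s)) * 1 / (1 * 1)) with (exp (C * (x * s))) by field. lra.
  - set (K := (C + c * INR (S k)) * x).
    pose proof (CMP (Hf (S k) s) (fun tau => Cmult (Cexp (Cscal (s - tau) (Cmult z (lam (S k))))) (Cmult z (G lam r z (S k) tau)))
      (fun tau => exp (K * (s - tau)) * gf C c (S k) (x * tau))
      (fun tau => x * exp (K * (s - tau)) * gf C c k (x * tau)) 0 s ltac:(lra)) as HM.
    rewrite Hf_s in HM. unfold Hf at 2 in HM.
    rewrite (G_init lam r N Hr) in HM by lia.
    assert (Cminus (G lam r z (S (S k)) s) (Cmult (Cexp (Cscal (s - 0) (Cmult z (lam (S k))))) C0) = G lam r z (S (S k)) s) as E.
    { generalize (G lam r z (S (S k)) s). intros; cring. }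
    rewrite E in HM.
    assert (gf C c (S k) (x * 0) = 0) as G0.
    { unfold gf. rewrite !Rmult_0_r, exp_0. cbn [pow]. unfold Rdiv; ring. }
    rewrite G0, Rmult_0_r, Rminus_0_r, Rminus_diag_eq, Rmult_0_r, exp_0, Rmult_1_l in HM by auto.
    apply HM.
    + intros; apply Hf_deriv; lia.
    + intros. unfold K. apply gf_deriv; auto.
    + intros tau Ht. rewrite !Cnorm_mult.
      assert (0 <= x) by apply Cnorm_ge0.
      pose proof (IHk ltac:(lia) tau ltac:(lra)) as H1.
      pose proof (E_bound (S k) s tau Hk ltac:(lra)) as H2. fold K in H2.
      pose proof (Cnorm_ge0 (G lam r z (S k) tau)).
      pose proof (Cnorm_ge0 (Cexp (Cscal (s - tau) (Cmult z (lam (S k)))))).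
      replace (x * exp (K * (s - tau)) * gf C c k (x * tau)) with (exp (K * (s - tau)) * (x * gf C c k (x * tau))) by ring.
      apply Rmult_le_compat; auto. apply Rmult_le_pos; auto.
      apply Rmult_le_compat_l; auto.
Qed.

End Bound.



Lemma sum_norms_nonneg lam n : 0 <= sum_norms lam n.
Proof. induction n; simpl. apply Cnorm_ge0. pose proof (Cnorm_ge0 (lam (S n))); lra. Qed.

Lemma sum_norms_ge lam n j : (j <= n)%nat -> Cnorm (lam j) <= sum_norms lam n.
Proof.
  induction n; intros Hj.
  - assert (j = 0%nat) by lia; subst; simpl; lra.
  - simpl. pose proof (sum_norms_nonneg lam n). pose proof (Cnorm_ge0 (lam (S n))).
    destruct (Nat.eq_dec j (S n)). subst; lra. specialize (IHn ltac:(lia)). lra.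
Qed.

Lemma Phi_G lam n z : Phi lam n z = G lam (radius lam n) z (S n) 1.
Proof.
  set (r := radius lam n).
  assert (Hr : forall j, (j <= n)%nat -> Cnorm (lam j) < r).
  { intros j Hj. unfold r, radius. pose proof (sum_norms_ge lam n j Hj). lra. }
  assert (EQ : forall t, Phi_integrand lam n z t = Cmult (Ef r z 1 t) (bt lam r (S n) t)).
  { intros t. unfold Phi_integrand, Ef, bt. fold r. simpl q. fold (cw r t).
    replace (Cscal 1 (Cmult z (cw r t))) with (Cmult z (cw r t)) by cring. unfold RC, TP. cring. }
  assert (HC : CC (Phi_integrand lam n z)).
  { apply (CC_ext (fun t => Cmult (Ef r z 1 t) (bt lam r (S n) t))). intros; rewrite EQ; auto.
    apply CC_mult. apply CC_Ef. apply CC_bt with (N := n); auto. }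
  unfold Phi. rewrite !Rint_RInt by (intros; apply HC).
  unfold G. rewrite <- (CI_ext _ _ EQ). unfold CI, TP. auto.
Qed.

Lemma Phi_bound lam n z C c : 0 < c -> 0 <= C ->
  (forall j, (j <= n)%nat -> Cnorm (lam j) <= C + c * INR j) ->
  INR (fact n) * Cnorm (Phi lam n z) <= exp (C * Cnorm z) * ((exp (c * Cnorm z) - 1) / c) ^ n.
Proof.
  intros Hc HC Ha. rewrite Phi_G.
  set (r := radius lam n).
  assert (Hr : forall j, (j <= n)%nat -> Cnorm (lam j) < r).
  { intros j Hj. unfold r, radius. pose proof (sum_norms_ge lam n j Hj). lra. }
  pose proof (G_bound lam r n Hr z C c Hc Ha n (le_n n) 1 ltac:(lra)).
  assert (0 < INR (fact n)) by (apply lt_0_INR, lt_O_fact).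
  eapply Rle_trans. apply Rmult_le_compat_l. lra. apply H.
  unfold gf. rewrite Rmult_1_r. unfold Rdiv. rewrite Rpow_mult_distr, pow_inv.
  right. field. repeat split; try lra; try (apply pow_nonzero; lra).
Qed.

Lemma L_exp1 y : 0 <= y <= 1 -> exp y - 1 <= 3 * y.
Proof.
  intros Hy. destruct (Req_dec y 0) as [->|Hn]. rewrite exp_0; lra.
  pose proof (exp_ineq1 (- y) ltac:(lra)).
  assert (exp y * exp (- y) = 1). { rewrite <- exp_plus. replace (y + - y) with 0 by ring. apply exp_0. }
  assert (exp y <= 3). { eapply Rle_trans; [|apply exp_le_3]. apply exp_le_exp'; lra. }
  pose proof (exp_pos y).
  assert (exp y * (1 + - y) <= 1) by nra. nra.
Qed.

Lemma nat_unbounded r : exists n : nat, r < INR n.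
Proof.
  destruct (archimed r) as [H1 H2].
  destruct (Z_le_gt_dec 0 (up r)).
  - exists (Z.to_nat (up r)). rewrite INR_IZR_INZ, Z2Nat.id by auto. lra.
  - exists 0%nat. simpl. apply Z.gt_lt in g. apply IZR_lt in g. lra.
Qed.

Lemma exp_ge1 y : 0 <= y -> 1 <= exp y.
Proof. intros. rewrite <- exp_0. apply exp_le_exp'; auto. Qed.

Theorem mainTheorem6 (beta : R) (lam : nat -> Cpx) :
  0 < beta ->
  (forall e : R, 0 < e -> exists N : nat, forall n : nat,
      (N <= n)%nat -> (1 <= n)%nat -> Cnorm (lam n) / INR n <= beta + e) ->
  (forall eps : R, 0 < eps -> exists alpha : R, 0 < alpha /\
     forall (n : nat) (z : Cpx),
       INR (fact n) * Cnorm (Phi lam n z)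
       <= exp (alpha * Cnorm z) *
          ((exp ((1 + eps) * beta * Cnorm z) - 1) / ((1 + eps) * beta)) ^ n)
  /\
  (forall z : Cpx, forall e : R, 0 < e -> exists N : nat, forall n : nat,
      (N <= n)%nat -> (1 <= n)%nat ->
      nroot n (INR (fact n) * Cnorm (Phi lam n z))
      <= (exp (beta * Cnorm z) - 1) / beta + e).
Proof.
  intros Hb Hlim.
  assert (P1 : forall eps : R, 0 < eps -> exists alpha : R, 0 < alpha /\
     forall (n : nat) (z : Cpx),
       INR (fact n) * Cnorm (Phi lam n z)
       <= exp (alpha * Cnorm z) *
          ((exp ((1 + eps) * beta * Cnorm z) - 1) / ((1 + eps) * beta)) ^ n).
  { intros eps He. destruct (Hlim (eps * beta)) as [N0 HN]. nra.
    pose proof (sum_norms_nonneg lam N0).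
    exists (1 + sum_norms lam N0). split. lra.
    intros n z. apply Phi_bound. nra. lra.
    intros j _. assert (0 <= INR j) by apply pos_INR.
    destruct (le_lt_dec j N0).
    - pose proof (sum_norms_ge lam N0 j l). assert (0 <= (1 + eps) * beta * INR j).
      { apply Rmult_le_pos; auto. nra. } lra.
    - specialize (HN j ltac:(lia) ltac:(lia)).
      assert (0 < INR j) by (apply lt_0_INR; lia).
      apply (Rmult_le_compat_r (INR j)) in HN; [|lra].
      unfold Rdiv in HN. rewrite Rmult_assoc, Rinv_l in HN by lra. nra. }
  split; auto.
  intros z e He. set (x := Cnorm z). assert (Hx : 0 <= x) by apply Cnorm_ge0.
  set (D := (exp (beta * x) - 1) / beta).
  assert (HD : 0 <= D). { unfold D. apply Rmult_le_pos. pose proof (exp_ge1 (beta * x) ltac:(nra)); lra.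
    left; apply Rinv_0_lt_compat; auto. }
  set (eb := exp (beta * x)). assert (Heb : 1 <= eb) by (apply exp_ge1; nra).
  set (K := 1 + beta * x + 6 * eb * x / e).
  assert (HK1 : 1 + beta * x <= K). { unfold K. assert (0 <= 6 * eb * x / e).
    { apply Rmult_le_pos. nra. left; apply Rinv_0_lt_compat; auto. } lra. }
  assert (HK2 : 6 * eb * x / e <= K). { unfold K. nra. }
  assert (HKp : 0 < K) by nra.
  set (eps := / K). assert (Heps : 0 < eps) by (apply Rinv_0_lt_compat; auto).
  destruct (P1 eps Heps) as [alpha [Hal Hbd]].
  set (c := (1 + eps) * beta).
  set (Q := (exp (c * x) - 1) / c).
  assert (Hc : beta <= c) by (unfold c; nra).
  assert (HQ0 : 0 <= Q). { unfold Q. apply Rmult_le_pos. pose proof (exp_ge1 (c * x) ltac:(nra)); lra.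
    left; apply Rinv_0_lt_compat; lra. }
  assert (HQ : Q <= D + e / 2).
  { assert (Q <= (exp (c * x) - 1) / beta).
    { unfold Q. pose proof (exp_ge1 (c * x) ltac:(nra)). unfold Rdiv.
      apply Rmult_le_compat_l. lra. apply Rinv_le_contravar; lra. }
    assert (E1 : exp (c * x) = eb * exp (eps * beta * x)).
    { unfold eb. rewrite <- exp_plus. f_equal. unfold c. ring. }
    assert (Hy : 0 <= eps * beta * x <= 1).
    { split. apply Rmult_le_pos; nra. unfold eps.
      replace (/ K * beta * x) with ((beta * x) / K) by (field; lra).
      apply Rmult_le_reg_r with K; auto. unfold Rdiv. rewrite Rmult_assoc, Rinv_l by lra. lra. }
    pose proof (L_exp1 _ Hy).
    assert ((exp (c * x) - 1) / beta = D + eb * (exp (eps * beta * x) - 1) / beta).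
    { rewrite E1. unfold D, eb. field. lra. }
    assert (eb * (exp (eps * beta * x) - 1) / beta <= 3 * eb * x * eps).
    { assert (eb * (exp (eps * beta * x) - 1) <= eb * (3 * (eps * beta * x))) by (apply Rmult_le_compat_l; lra).
      replace (3 * eb * x * eps) with (eb * (3 * (eps * beta * x)) / beta) by (field; lra).
      unfold Rdiv. apply Rmult_le_compat_r; auto. left; apply Rinv_0_lt_compat; auto. }
    assert (3 * eb * x * eps <= e / 2).
    { unfold eps. apply Rmult_le_reg_r with K; auto. rewrite Rmult_assoc, Rinv_l by lra.
      apply Rmult_le_reg_r with (2 / e). apply Rdiv_lt_0_compat; lra.
      replace (e / 2 * K * (2 / e)) with K by (field; lra).
      replace (3 * eb * x * 1 * (2 / e)) with (6 * eb * x / e) by (field; lra). lra. }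
    lra. }
  destruct (nat_unbounded (1 + alpha * x + 6 * alpha * x * (D + e / 2) / e)) as [N HN].
  exists N. intros n HnN Hn1.
  assert (HnR : INR N <= INR n) by (apply le_INR; auto).
  assert (Hnp : 0 < INR n) by (apply lt_0_INR; lia).
  specialize (Hbd n z). fold x in Hbd. fold c Q in Hbd.
  unfold nroot. destruct (Rlt_dec 0 (INR (fact n) * Cnorm (Phi lam n z))) as [Hv|Hv].
  2: { lra. }
  assert (HQp : 0 < Q).
  { destruct HQ0 as [|HQ0]; auto. rewrite <- HQ0 in Hbd. rewrite pow_i in Hbd by lia. lra. }
  eapply Rle_trans. apply Rle_Rpower_l. left; apply Rinv_0_lt_compat; auto. split; [exact Hv| exact Hbd].
  rewrite <- Rpower_mult_distr by (try apply exp_pos; apply pow_lt; auto).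
  rewrite <- (Rpower_pow n Q HQp), Rpower_mult, Rinv_r, Rpower_1 by (auto; lra).
  unfold Rpower at 1. rewrite ln_exp.
  set (u := / INR n * (alpha * x)).
  assert (Hu : 0 <= u <= 1).
  { unfold u. split. apply Rmult_le_pos. left; apply Rinv_0_lt_compat; auto. nra.
    apply Rmult_le_reg_r with (INR n); auto. rewrite Rmult_comm, <- Rmult_assoc, Rinv_r by lra.
    assert (0 <= 6 * alpha * x * (D + e / 2) / e).
    { apply Rmult_le_pos. apply Rmult_le_pos. nra. lra. left; apply Rinv_0_lt_compat; auto. }
    lra. }
  pose proof (L_exp1 u Hu).
  assert (3 * u * (D + e / 2) <= e / 2).
  { unfold u. apply Rmult_le_reg_r with (INR n * (2 / e)). apply Rmult_lt_0_compat; auto. apply Rdiv_lt_0_compat; lra.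
    replace (3 * (/ INR n * (alpha * x)) * (D + e / 2) * (INR n * (2 / e))) with (6 * alpha * x * (D + e / 2) / e) by (field; lra).
    replace (e / 2 * (INR n * (2 / e))) with (INR n) by (field; lra).
    assert (0 <= alpha * x) by nra. lra. }
  assert (exp u * Q <= Q + 3 * u * Q).
  { assert ((exp u - 1) * Q <= 3 * u * Q) by (apply Rmult_le_compat_r; lra). lra. }
  assert (3 * u * Q <= 3 * u * (D + e / 2)) by (apply Rmult_le_compat_l; lra).
  lra.
Qed.
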